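(* Let $G$ be a graph with vertex set $\{v_1,\dots,v_n\}$ and let $k\ge 2$ be an integer. Construct a graph $G'$ as follows. Its vertices are the ''$v$-type'' vertices $v_{i,j}$ for $1\le i\le n$, $1\le j\le k$, and the ''$u$-type'' vertices $u_{i,j}$ for $1\le i,j\le k$, $i\ne j$. For any vertex $x_{i,j}$ (of either type), $i$ is its row number and $j$ its column number. The edges of $G'$ are: (1) column edges: every two distinct vertices (of any types) with the same column number are adjacent; (2) row edges: every two distinct $v$-type vertices with the same row number are adjacent; (3) diagonal edges: $u_{i,j}$ and $u_{i',j'}$ are adjacent whenever $i\neq i'$ and $j\ne j'$; (4) cross edges: $u_{a,b}$ and $v_{c,d}$ are adjacent if and only if $a=d$; (5) $G$-edges: $v_{i,j}$ and $v_{i',j'}$ are adjacent whenever $v_iv_{i'}\in E(G)$; and there are no other edges. Then: (a) $i(G')=k-1$; (b) $\mu_\alpha(G')\le 1$; (c) $\alpha(G)\ge k$ if and only if $\alpha(G')\ge k$; (d) $\alpha(G)\ge k$ if and only if $G'$ is not well-covered.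
   Context: All graphs are finite, simple and undirected. For a graph $G$, $\alpha(G)$ is the maximum size of an independent set and $i(G)$ is the minimum size of a maximal (with respect to inclusion) independent set; the independence gap is $\mu_\alpha(G)=\alpha(G)-i(G)$. A graph is well-covered if all its maximal independent sets have the same size. *)

(* Defs.v *)
From mathcomp Require Import all_boot.
Set Implicit Arguments. Unset Strict Implicit. Unset Printing Implicit Defensive.

(* A simple graph is a finite type with an irreflexive symmetric relation e. *)
Section Graphs.
Variable T : finType.
Variable e : rel T.

Definition independent (S : {set T}) : bool :=
  [forall x in S, forall y in S, ~~ e x y].

Definition maximal_independent (S : {set T}) : bool :=
  independent S && [forall x, (x \notin S) ==> ~~ independent (x |: S)].

Definition alpha : nat := \max_(S : {set T} | independent S) #|S|.

(* i(G): minimum size of a maximal independent set (#|T| is a harmless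
   default, since every set has size <= #|T| and maximal sets exist). *)
Definition indep_min : nat :=
  \big[minn/#|T|]_(S : {set T} | maximal_independent S) #|S|.

Definition indep_gap : nat := alpha - indep_min.

Definition well_covered : Prop :=
  forall S1 S2 : {set T}, maximal_independent S1 -> maximal_independent S2 ->
    #|S1| = #|S2|.
End Graphs.

(* Vertex set of G': v-type vertices v_{i,j} = inl (i,j), i in 'I_n, j in 'I_k;
   u-type vertices u_{i,j} = inr (i,j), i,j in 'I_k, i != j.
   First component = row number, second = column number. *)
Definition GV (n k : nat) : finType :=
  (('I_n * 'I_k) + {p : 'I_k * 'I_k | p.1 != p.2})%type.

Arguments GV : clear implicits.
Definition Gprime_adj (n k : nat) (e : rel 'I_n) (x y : GV n k) : bool :=
  match x, y with
  | inl (i, j), inl (i', j') =>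
      (x != y) && [|| j == j' (* column edge *), i == i' (* row edge *)
                    | e i i' (* G-edge *)]
  | inl (c, d), inr u | inr u, inl (c, d) =>
      ((val u).2 == d) (* column edge *) || ((val u).1 == d) (* cross edge *)
  | inr u, inr u' =>
      (x != y) && (((val u).2 == (val u').2) (* column edge *)
                   || (((val u).1 != (val u').1) && ((val u).2 != (val u').2)))
                   (* diagonal edge *)
  end.
Arguments Gprime_adj {n} k e x y.

(* Main.v *)
Require Import Defs.
From mathcomp Require Import all_boot zify.
Set Implicit Arguments. Unset Strict Implicit. Unset Printing Implicit Defensive.

Lemma indepP (T : finType) (e : rel T) (S : {set T}) :
  reflect (forall x y, x \in S -> y \in S -> ~~ e x y) (independent e S).
Proof.
apply: (iffP forallP) => [H x y xS yS | H x].
  by move: (H x); rewrite xS /= => /forallP /(_ y); rewrite yS.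
by apply/implyP => xS; apply/forallP => y; apply/implyP => yS; apply: H.
Qed.

Lemma not_indep (T : finType) (e : rel T) (S : {set T}) x y :
  x \in S -> y \in S -> e x y -> ~~ independent e S.
Proof. by move=> xS yS exy; apply/indepP => /(_ x y xS yS); rewrite exy. Qed.

Lemma indep_add (T : finType) (e : rel T) (S : {set T}) w :
  ~~ e w w -> independent e S -> (forall y, y \in S -> ~~ e w y && ~~ e y w) ->
  independent e (w |: S).
Proof.
move=> ww /indepP iS H; apply/indepP => x y; rewrite !in_setU1.
case/orP=> [/eqP->|xS]; case/orP=> [/eqP->|yS] //.
- by case/andP: (H y yS).
- by case/andP: (H x xS).
- exact: iS.
Qed.

Lemma bigmin_le (T : finType) (P : pred T) (F : T -> nat) m x :
  P x -> \big[minn/m]_(i | P i) F i <= F x.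
Proof.
move=> Px; rewrite /index_enum; have : x \in Finite.enum T by rewrite -enumT mem_enum.
elim: (Finite.enum T) => // a r IH; rewrite in_cons big_cons.
case/orP=> [/eqP<-|xr]; first by rewrite Px geq_minl.
by case: (P a); rewrite ?geq_min IH ?orbT.
Qed.

Lemma alpha_wit (T : finType) (e : rel T) m : 0 < m -> m <= alpha e ->
  exists S, independent e S /\ m <= #|S|.
Proof.
move=> m0 ma.
case: (boolP [exists S : {set T}, independent e S && (m <= #|S|)]).
  by case/existsP => S /andP[]; exists S.
move/existsPn => nS; suff : alpha e <= m.-1 by move: ma m0; clear; lia.
apply/bigmax_leqP => S iS; move: (nS S); rewrite iS /= -ltnNge.
by move: m0; clear; lia.
Qed.

Section G.
Variables (n k : nat) (e : rel 'I_n).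
Hypotheses (ei : irreflexive e) (es : symmetric e) (k2 : 2 <= k).
Local Notation adj := (Gprime_adj k e).
Local Notation V := (GV n k).

Definition col (x : V) : 'I_k := match x with inl p => p.2 | inr u => (val u).2 end.

Lemma adj_irr x : ~~ adj x x.
Proof. by case: x => [[i j]|u] /=; rewrite eqxx. Qed.

Lemma adj_sym x y : adj x y = adj y x.
Proof.
case: x => [[i j]|u]; case: y => [[i' j']|u'] //=.
- by rewrite eq_sym (eq_sym j) (eq_sym i) es.
- by rewrite eq_sym (eq_sym (val u).2) (eq_sym (val u).1).
Qed.

Lemma col_inj S : independent adj S -> {in S &, injective col}.
Proof.
move/indepP=> iS x y xS yS ec; apply/eqP; apply: contraT => nxy.
move: (iS x y xS yS); case: x y nxy ec {xS yS} => [[i j]|u] [[i' j']|u'] //= nxy ec;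
  rewrite ?nxy ?ec ?eqxx //=.
Qed.

Lemma card_indep S : independent adj S -> #|S| <= k.
Proof.
move=> iS; rewrite -(card_in_imset (col_inj iS)).
by apply: leq_trans (max_card _) _; rewrite card_ord.
Qed.

Lemma u_row S u u' : independent adj S -> inr u \in S -> inr u' \in S ->
  (val u).1 = (val u').1.
Proof.
move/indepP=> iS uS u'S; have := iS _ _ uS u'S => /=.
have [->//|nuu] := eqVneq u u'.
have -> : (inr u : V) != inr u' by apply: contra nuu => /eqP [->].
rewrite /= negb_or => /andP[n2]; rewrite negb_and !negbK.
by case/orP=> /eqP // e2; rewrite e2 eqxx in n2.
Qed.

Lemma u_col S u : independent adj S -> inr u \in S -> (val u).1 \notin col @: S.
Proof.
move=> iS uS; apply/imsetP => [[[[i j]|u'] xS /= ex]].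
  by move/indepP: iS => /(_ _ _ uS xS) /=; rewrite ex eqxx orbT.
by move: (valP u'); rewrite -(u_row iS uS xS) ex eqxx.
Qed.

Lemma card_u S u : independent adj S -> inr u \in S -> #|S| <= k.-1.
Proof.
move=> iS uS; rewrite -(card_in_imset (col_inj iS)).
apply: leq_trans (_ : #|[set~ (val u).1]| <= _); last by rewrite cardsC1 card_ord.
apply: subset_leq_card; apply/subsetP => c cS; rewrite !inE.
by apply: contraNneq (u_col iS uS) => <-.
Qed.

Lemma maximal_ge S : maximal_independent adj S -> k.-1 <= #|S|.
Proof.
case/andP => iS /forallP mS; rewrite leqNgt; apply/negP => lt.
have : 1 < #|~: (col @: S)|.
  have := cardsC (col @: S); rewrite card_ord (card_in_imset (col_inj iS)).
  move: lt; clear; lia.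
case/card_gt1P => c1 [c2 [c1n c2n c12]]; rewrite !inE in c1n c2n.
have addw : forall w, col w \notin col @: S -> (forall y, y \in S -> ~~ adj w y) -> False.
  move=> w cw H; have wS : w \notin S by apply: contra cw => wS; apply: imset_f.
  have := mS w; rewrite wS /= => /negP; apply; apply: indep_add.
  - exact: adj_irr.
  - exact: iS.
  - by move=> y yS; rewrite (adj_sym y w) andbb H.
case: (boolP [exists u, inr u \in S]).
- case/existsP => u uS; set a := (val u).1.
  have [c [cn ca]] : exists c, c \notin col @: S /\ c != a.
    case: (eqVneq c1 a) => [e1|]; last by exists c1.
    by exists c2; rewrite -e1 eq_sym.
  have ac : (a, c).1 != (a, c).2 by rewrite /= eq_sym.
  apply: (addw (inr (exist _ (a, c) ac))) => //= y.
  case: y => [[i j]|u'] yS /=.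
    have := imset_f col yS => /= jS.
    rewrite negb_or; apply/andP; split; first by apply: contra cn => /eqP ->.
    by apply: contra (u_col iS uS) => /eqP ea; rewrite -ea in jS.
  have := imset_f col yS => /= jS.
  rewrite (u_row iS yS uS) -/a eqxx /=.
  have -> : (c == (val u').2) = false by apply/negbTE; apply: contra cn => /eqP ->.
  by rewrite andbF.
- move/existsPn => nu.
  apply: (addw (inr (exist _ (c1, c2) c12))) => //= y.
  case: y => [[i j]|u'] yS /=; last by move: (nu u'); rewrite yS.
  have := imset_f col yS => /= jS.
  rewrite negb_or; apply/andP; split; first by apply: contra c2n => /eqP ->.
  by apply: contra c1n => /eqP ->.
Qed.

Lemma S0_max : exists S, maximal_independent adj S /\ exists u, inr u \in S.
Proof.
have k0 : 0 < k by apply: leq_trans k2.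
pose z : 'I_k := Ordinal k0. pose o : 'I_k := Ordinal k2.
have zo : z != o by [].
pose mku (d : 'I_k) (h : z != d) : V := inr (exist _ (z, d) h).
pose S0 := [set x : V | if x is inr u then (val u).1 == z else false].
have mS0 d h : mku d h \in S0 by rewrite inE /= eqxx.
have neqinr (a b : {p : 'I_k * 'I_k | p.1 != p.2}) : a != b -> (inr a : V) != inr b.
  by apply: contra => /eqP [->].
exists S0; split; last by exists (exist _ (z, o) zo); apply: mS0.
apply/andP; split.
  apply/indepP => [[[i j]|u] [[i' j']|u']]; rewrite !inE //= => /eqP u1 /eqP u2.
  have [->|nuu] := eqVneq u u'; first by rewrite eqxx.
  rewrite (negbTE (neqinr _ _ nuu)) /= u1 u2 eqxx /= orbF.
  apply: contra nuu => /eqP e2; apply/eqP; move: u1 u2 e2.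
  case: u => [[a b] ?]; case: u' => [[a' b'] ?] /= u1 u2 e2; apply: val_inj => /=.
  by rewrite u1 u2 e2.
apply/forallP => x; apply/implyP => xS.
have Hy : exists2 y, y \in S0 & adj x y.
  case: x xS => [[c d]|u'] xS.
    have [dz|dz] := eqVneq d z.
      by exists (mku o zo) => //=; rewrite dz eqxx orbT.
    have zd : z != d by rewrite eq_sym.
    by exists (mku d zd) => //=; rewrite eqxx.
  rewrite inE /= in xS.
  have [dz|dz] := eqVneq (val u').2 z.
    exists (mku o zo) => //=; rewrite neqinr /=; last first.
      by apply: contra xS => /eqP ->.
    by rewrite xS dz zo orbT.
  have zd : z != (val u').2 by rewrite eq_sym.
  exists (mku _ zd) => //=; rewrite neqinr /= ?eqxx //.
  by apply: contra xS => /eqP ->.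
case: Hy => y yS xy; apply: (not_indep (x := x) (y := y)) => //.
  by rewrite setU11.
by rewrite setU1r.
Qed.

Lemma alpha_le : alpha adj <= k.
Proof. by apply/bigmax_leqP => S; apply: card_indep. Qed.

Lemma indep_min_eq : indep_min adj = k.-1.
Proof.
have [S0 [mS0 [u uS0]]] := S0_max.
have iS0 : independent adj S0 by case/andP: mS0.
apply/eqP; rewrite eqn_leq; apply/andP; split.
  apply: leq_trans (bigmin_le _ _ mS0) _; exact: card_u iS0 uS0.
apply: (big_ind (fun x => k.-1 <= x)).
- exact: leq_trans (maximal_ge mS0) (max_card _).
- by move=> x y hx hy; rewrite leq_min hx hy.
- by move=> S; apply: maximal_ge.
Qed.

Lemma G'_to_G S : independent adj S -> k <= #|S| -> k <= alpha e.
Proof.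
move=> iS kS.
have nu : forall u, inr u \notin S.
  move=> u; apply/negP => uS; have := card_u iS uS; move: kS k2; clear; lia.
pose R := [set i : 'I_n | [exists j, inl (i, j) \in S]].
have iR : independent e R.
  apply/indepP => x y; rewrite !inE => /existsP[j xS] /existsP[j' yS].
  move/indepP: iS => /(_ _ _ xS yS) /=; apply: contra => exy.
  have -> : (inl (x, j) : V) != inl (y, j').
    apply/negP => /eqP [ex _]; by rewrite ex ei in exy.
  by rewrite exy !orbT.
apply: leq_trans (leq_bigmax_cond _ iR); apply: leq_trans kS _.
pose rowo (x : V) : option 'I_n := if x is inl p then Some p.1 else None.
have rinj : {in S &, injective rowo}.
  move=> [[i j]|u] [[i' j']|u'] xS yS //=; try by rewrite (negbTE (nu _)) in xS yS.
  move=> [ei']; apply/eqP; apply: contraT => nxy.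
  by move/indepP: iS => /(_ _ _ xS yS) /=; rewrite nxy ei' eqxx orbT.
rewrite -(card_in_imset rinj) -(card_imset R (@Some_inj _)).
apply: subset_leq_card; apply/subsetP => o /imsetP[[[i j]|u] xS ->].
  by apply: imset_f; rewrite inE; apply/existsP; exists j.
by rewrite (negbTE (nu _)) in xS.
Qed.

Lemma G_to_G' : k <= alpha e -> exists S, independent adj S /\ #|S| = k.
Proof.
move=> ka; have [R [iR kR]] := alpha_wit (leq_trans (isT : 0 < 2) k2) ka.
pose r (j : 'I_k) : 'I_n := enum_val (widen_ord kR j).
have rR j : r j \in R by exact: enum_valP.
exists [set (inl (r j, j) : V) | j : 'I_k]; split.
  apply/indepP => x y /imsetP[j _ ->] /imsetP[j' _ ->] /=.
  have [->|njj] := eqVneq j j'; first by rewrite eqxx.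
  rewrite /=.
  have -> : (r j == r j') = false.
    apply/negbTE; apply: contra njj => /eqP /enum_val_inj /(congr1 val) /= ejj.
    by apply/eqP; apply: val_inj.
  by move/indepP: iR => /(_ _ _ (rR j) (rR j')) /negbTE ->; rewrite andbF.
rewrite card_imset ?card_ord //.
by move=> j j' [_ ->].
Qed.
End G.

Theorem mainTheorem9 (n k : nat) (e : rel 'I_n) :
  irreflexive e -> symmetric e -> 2 <= k ->
  [/\ indep_min (Gprime_adj k e) = k.-1,
      indep_gap (Gprime_adj k e) <= 1,
      (k <= alpha e) <-> (k <= alpha (Gprime_adj k e))
    & (k <= alpha e) <-> ~ well_covered (Gprime_adj k e)].
Proof.
move=> ei es k2.
have Imin := indep_min_eq es k2.
have Ac : (k <= alpha e) <-> (k <= alpha (Gprime_adj k e)).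
  split.
    case/(G_to_G' k2) => S [iS cS].
    by apply: leq_trans (leq_bigmax_cond _ iS); rewrite cS.
  move=> ka; have [S [iS kS]] := alpha_wit (leq_trans (isT : 0 < 2) k2) ka.
  exact: (@G'_to_G n k e ei k2 S iS kS).
split => //.
- rewrite /indep_gap Imin; have := alpha_le k e; move: k2; clear; lia.
split.
  case/(G_to_G' k2) => S [iS cS] WC.
  have mS : maximal_independent (Gprime_adj k e) S.
    apply/andP; split => //; apply/forallP => x; apply/implyP => xS.
    apply/negP => /card_indep ; rewrite cardsU1 xS cS; clear; lia.
  have [S0 [mS0 [u uS0]]] := S0_max e k2.
  case/andP: (mS0) => iS0 _; have := card_u iS0 uS0.
  rewrite -(WC _ _ mS mS0) cS.
  by move: k2; clear; lia.
case: (leqP k (alpha e)) => // lt nWC; exfalso; apply: nWC.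
have sz S : maximal_independent (Gprime_adj k e) S -> #|S| = k.-1.
  move=> mS; apply/eqP; rewrite eqn_leq (maximal_ge es) // andbT.
  case/andP: mS => iS _; rewrite leqNgt; apply/negP => big.
  have : k <= alpha e.
    apply: (@G'_to_G n k e ei k2 S iS); move: big k2; clear; lia.
  by rewrite leqNgt lt.
by move=> S1 S2 m1 m2; rewrite !sz.
Qed.
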